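(* Let $N\ge3$ and consider, in the field variables $(\rho,\psi,\mu_1,\dots,\mu_{N-2})$, the hydrodynamic Poisson bracket $$\{F,G\}=\int\Big(\partial_xF_\psi G_\rho-F_\rho\partial_xG_\psi+\partial_xF_k\,\alpha_{kl}(\boldsymbol\mu)\,G_l+F_k\,\beta_{kl}(\boldsymbol\mu,\partial_x\boldsymbol\mu)\,G_l\Big)\mathrm dx,$$ with $\alpha_{kl}=(k+l)\mu_{k+l-1}$, $\beta_{kl}=k\,\partial_x\mu_{k+l-1}$, $k,l=1,\dots,N-2$ (summed), and $\mu_j=0$ for $j\ge N-1$. At points where $\mu_{N-2}\neq0$, the signature of this bracket is $(\lfloor N/2\rfloor,\lceil N/2\rceil)$ or $(\lceil N/2\rceil,\lfloor N/2\rfloor)$.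
   Context: Fields vanish at infinity with all derivatives; $F_\rho,F_\psi,F_k=\delta F/\delta\mu_k$ are functional derivatives. This bracket (Burby's closure of the one-dimensional Vlasov equation) is known to satisfy the Jacobi identity. A hydrodynamic bracket $\int(\partial_xF_n\alpha_{nm}G_m+F_n\beta_{nm}G_m)\mathrm dx$ is non-degenerate if $\alpha$ is invertible; a non-degenerate hydrodynamic Poisson bracket can be written, in suitable local coordinates $\boldsymbol\nu$, as $\int\partial_x\overline F_ng_{nm}\overline G_m\mathrm dx$ with $g$ constant symmetric non-degenerate (Dubrovin–Novikov), and its signature is the signature $(l,q)$ of $g$, $l$ the number of positive and $q$ the number of negative eigenvalues. *)

(* Defs.v *)
From HB Require Import structures.
From mathcomp Require Import all_boot all_order all_algebra.
From mathcomp Require Import polyrcf.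
Set Implicit Arguments. Unset Strict Implicit. Unset Printing Implicit Defensive.
Import Order.TTheory GRing.Theory Num.Theory.
Local Open Scope ring_scope.

Definition npos_eig (R : rcfType) (n : nat) (A : 'M[R]_n) : nat :=
  \sum_(x <- rootsR (char_poly A) | 0 < x) mup x (char_poly A).
Definition nneg_eig (R : rcfType) (n : nat) (A : 'M[R]_n) : nat :=
  \sum_(x <- rootsR (char_poly A) | x < 0) mup x (char_poly A).

Definition signature (R : rcfType) (n : nat) (A : 'M[R]_n) : nat * nat :=
  (npos_eig A, nneg_eig A).

Definition muN (R : rcfType) (N : nat) (mu : nat -> R) (j : nat) : R :=
  if (1 <= j <= N - 2)%N then mu j else 0.

(* Leading coefficient matrix alpha_{nm} of the hydrodynamic bracket
     { F, G } = \int ( d_x F_psi G_rho - F_rho d_x G_psi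
                       + d_x F_k alpha_kl G_l + F_k beta_kl G_l ) dx
   written in the form \int (d_x F_n alpha_nm G_m + F_n beta_nm G_m) dx
   in the field variables (rho, psi, mu_1, ..., mu_(N-2)),
   indexed 0 = rho, 1 = psi, i = k+1 for mu_k (k = 1..N-2).
   - the term d_x F_psi G_rho gives alpha_{psi rho} = 1;
   - the term -F_rho d_x G_psi = d_x F_rho G_psi after integration by parts
     (fields vanish at infinity), giving alpha_{rho psi} = 1;
   - alpha_{kl} = (k+l) mu_{k+l-1} on the mu-block. *)
Definition bracket_alpha (R : rcfType) (N : nat) (mu : nat -> R) : 'M[R]_N :=
  \matrix_(i < N, j < N)
    if ((val i == 0%N) && (val j == 1%N)) || ((val i == 1%N) && (val j == 0%N)) then 1
    else if (2 <= val i)%N && (2 <= val j)%N then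
      let k := (val i - 1)%N in let l := (val j - 1)%N in
      (k + l)%:R * muN N mu (k + l - 1)
    else 0.

(* Signature of the (non-degenerate) hydrodynamic Poisson bracket at the
   point with moments mu: the signature of its leading coefficient
   alpha (the contravariant flat metric g^{nm}); in Dubrovin-Novikov flat
   coordinates alpha becomes the constant matrix g (up to inversion,
   which preserves signature), and signature is invariant under the
   congruence alpha -> J alpha J^T induced by a change of coordinates. *)
Definition bracket_signature (R : rcfType) (N : nat) (mu : nat -> R) :=
  signature (bracket_alpha N mu).

(* Main.v *)
Require Import Defs.
From HB Require Import structures.
From mathcomp Require Import all_boot all_order all_algebra.
From mathcomp Require Import polyrcf complex spectral sesquilinear.
From mathcomp Require Import zify.
Set Implicit Arguments. Unset Strict Implicit. Unset Printing Implicit Defensive.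
Import Order.TTheory GRing.Theory Num.Theory.
Local Open Scope ring_scope.
Local Open Scope sesquilinear_scope.

Section Gen.
Variable C : numClosedFieldType.

Definition form n (B : 'M[C]_n) (x : 'rV[C]_n) : C := (x *m B *m x^t*) 0 0.

Definition Emx n (S : {set 'I_n}) : 'M[C]_(#|S|, n) :=
  \matrix_(a, j) (enum_val a == j)%:R.

Lemma Emx_rank n (S : {set 'I_n}) : \rank (Emx S) = #|S|.
Proof.
apply/eqP; rewrite eqn_leq rank_leq_row /=.
have E1 : Emx S *m (Emx S)^T = 1%:M.
  apply/matrixP => a b; rewrite !mxE.
  rewrite (bigD1 (enum_val a)) //= big1 ?addr0.
    by rewrite !mxE eqxx mul1r (inj_eq enum_val_inj) eq_sym.
  by move=> j /negPf hj; rewrite !mxE eq_sym hj mul0r.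
by rewrite -{1}(mxrank1 C #|S|) -E1 mxrankM_maxl.
Qed.

Lemma Emx_supp n (S : {set 'I_n}) (y : 'rV[C]_#|S|) j :
  j \notin S -> (y *m Emx S) 0 j = 0.
Proof.
move=> jS; rewrite !mxE big1 // => a _; rewrite mxE.
case: eqP => [ej|]; last by rewrite mulr0.
by move: jS; rewrite -ej enum_valP.
Qed.

Lemma form_diag n (U : 'M[C]_n) (d : 'rV[C]_n) (w : 'rV[C]_n) :
  U \is unitarymx ->
  form (U^t* *m diag_mx d *m U) (w *m U) = \sum_j d 0 j * (w 0 j * (w 0 j)^*).
Proof.
move=> Uu; rewrite /form trmx_mul map_mxM.
have UU := unitarymxP Uu.
rewrite !mulmxA mulmxtVK // -[w *m diag_mx d *m U *m U^t*]mulmxA UU mulmx1.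
rewrite mxE; apply: eq_bigr => j _.
by rewrite mul_mx_diag !mxE mulrCA mulrA.
Qed.

Lemma key n (U : 'M[C]_n) (d : 'rV[C]_n) (T S : {set 'I_n}) :
  U \is unitarymx ->
  (forall i, i \in T -> d 0 i < 0) ->
  (forall x : 'rV_n, (forall j, j \notin S -> x 0 j = 0) ->
      0 <= form (U^t* *m diag_mx d *m U) x) ->
  (#|T| + #|S| <= n)%N.
Proof.
move=> Uu dT Sf; rewrite leqNgt; apply/negP => hlt.
have Uf : row_free U by rewrite row_free_unit unitarymx_unit.
pose XT := Emx T *m U.
have rXT : \rank XT = #|T| by rewrite /XT mxrankMfree // Emx_rank.
have hcap : (0 < \rank (XT :&: Emx S))%N.
  have := mxrank_sum_cap XT (Emx S); rewrite rXT Emx_rank.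
  have := rank_leq_col (XT + Emx S)%MS. lia.
pose x := nz_row (XT :&: Emx S)%MS.
have xn0 : x != 0.
  by rewrite nz_row_eq0 -mxrank_eq0 -lt0n.
have xT : (x <= XT)%MS := submx_trans (nz_row_sub _) (capmxSl _ _).
have xS : (x <= Emx S)%MS := submx_trans (nz_row_sub _) (capmxSr _ _).
have [y xy] := submxP xT.
have [y' xy'] := submxP xS.
have := Sf x; rewrite {1}xy'.
move=> /(_ (fun j => Emx_supp y' (j:=j))).
rewrite xy /XT mulmxA form_diag //.
set w := y *m Emx T.
have wT j : j \notin T -> w 0 j = 0 by apply: Emx_supp.
have wn0 : w != 0.
  by apply: contraNneq xn0 => w0; rewrite xy /XT mulmxA -/w w0 mul0mx.
have [j wj] : exists j, w 0 j != 0.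
  apply/existsP; apply: contraR wn0 => /existsPn h.
  by apply/eqP/rowP => k; move: (h k); rewrite negbK => /eqP ->; rewrite mxE.
have jT : j \in T by apply: contraR wj => /wT ->.
rewrite (bigD1 j) //=.
have t1 : d 0 j * (w 0 j * (w 0 j)^*) < 0.
  by rewrite pmulr_llt0 ?dT // mul_conjC_gt0.
have t2 : \sum_(i | i != j) d 0 i * (w 0 i * (w 0 i)^*) <= 0.
  apply: sumr_le0 => i _.
  case: (boolP (i \in T)) => iT.
    by apply: mulr_le0_ge0; [exact/ltW/dT | exact: mul_conjC_ge0].
  by rewrite wT // mul0r mulr0.
by move=> h; have := le_lt_trans h (ltr_leD t1 t2); rewrite addr0 ltxx.
Qed.


Lemma key' n (U : 'M[C]_n) (d : 'rV[C]_n) (T S : {set 'I_n}) :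
  U \is unitarymx ->
  (forall i, i \in T -> 0 < d 0 i) ->
  (forall x : 'rV_n, (forall j, j \notin S -> x 0 j = 0) ->
      form (U^t* *m diag_mx d *m U) x <= 0) ->
  (#|T| + #|S| <= n)%N.
Proof.
move=> Uu dT Sf; apply: (@key n U (- d)) => //.
  by move=> i iT; rewrite mxE oppr_lt0 dT.
move=> x xS.
have -> : U^t* *m diag_mx (- d) *m U = - (U^t* *m diag_mx d *m U).
  have -> : diag_mx (- d) = - diag_mx d.
    by apply/matrixP => i j; rewrite !mxE mulNrn.
  by rewrite mulmxN mulNmx.
by rewrite /form mulmxN mulNmx mxE oppr_ge0 Sf.
Qed.
End Gen.
Lemma char_poly_conj (F : fieldType) n (U B : 'M[F]_n) : U \in unitmx ->
  char_poly (invmx U *m B *m U) = char_poly B.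
Proof.
move=> Uu; rewrite /char_poly.
have Up : map_mx polyC U \in unitmx by rewrite map_unitmx.
have -> : char_poly_mx (invmx U *m B *m U) =
   invmx (map_mx polyC U) *m char_poly_mx B *m map_mx polyC U.
  rewrite /char_poly_mx mulmxBr mulmxBl !map_mxM map_invmx; congr (_ - _).
  by rewrite -mulmxA -scalar_mxC mulmxA mulVmx // mul1mx.
rewrite !det_mulmx det_inv mulrC mulrA mulrV ?mul1r //.
Qed.

Lemma sum_count_mem (T : eqType) (s t : seq T) (P : pred T) : uniq s ->
  {subset t <= s} ->
  \sum_(x <- s | P x) count_mem x t = count P t.
Proof.
move=> us; elim: t => [|y t IH] ts.
  by rewrite big1 //.
rewrite /= big_split /= IH; last by move=> z zt; apply: ts; rewrite inE zt orbT.
congr (_ + _)%N.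
have ys : y \in s by apply: ts; rewrite inE eqxx.
rewrite (big_rem _ ys) eqxx big1_seq ?addn0; first by case: (P y).
move=> z /andP[_ zs]; apply/eqP; rewrite eqb0; apply/eqP => yz.
by move: zs; rewrite -yz mem_rem_uniqF.
Qed.

Lemma count_roots (R : rcfType) n (r : 'I_n -> R) (P : pred R) :
  \sum_(x <- rootsR (\prod_(i < n) ('X - (r i)%:P)) | P x)
     mup x (\prod_(i < n) ('X - (r i)%:P)) = #|[set i | P (r i)]|.
Proof.
set p := \prod_(i < n) _.
have pE : p = \prod_(y <- map r (enum 'I_n)) ('X - y%:P).
  by rewrite big_map big_enum.
have pn0 : p != 0 by rewrite pE; apply/monic_neq0/monic_prod_XsubC.
have hr := roots_on_rootsR pn0.
have us : uniq (rootsR p) by rewrite /rootsR uniq_roots.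
have mE x : mup x p = count_mem x (map r (enum 'I_n)) by rewrite pE mu_prod_XsubC.
under eq_bigr => x _ do rewrite mE.
rewrite sum_count_mem //.
  rewrite count_map cardsE cardE /enum_mem size_filter (@eq_filter _ _ predT) // filter_predT.
  by apply: eq_count.
move=> y /mapP [i _ ->]; rewrite -(roots_on_rootsR pn0) /=.
apply/rootP; rewrite /p horner_prod; apply/eqP/prodf_eq0; exists i => //.
by rewrite hornerXsubC subrr.
Qed.


Section Real.
Variable R : rcfType.
Local Notation C := (complex R).
Local Notation toC := (real_complex R).

Lemma real_C (x : C) : x \is Num.real -> x = toC (complex.Re x).
Proof.
case: x => a b; rewrite realE !lecE /= => h.
have -> : b = 0 by case/orP: h => /andP[/eqP -> _].
by [].
Qed.

Lemma real_toC (a : R) : toC a \is Num.real.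
Proof. by rewrite realE !lecE /= eqxx /= le_total. Qed.

Local Open Scope sesquilinear_scope.

Lemma spectral_real n (A : 'M[R]_n) : A^T = A ->
  exists U : 'M[C]_n, exists r : 'I_n -> R,
    [/\ U \is unitarymx,
        map_mx (real_complex R) A = U^t* *m diag_mx (\row_i toC (r i)) *m U &
        char_poly A = \prod_i ('X - (r i)%:P)].
Proof.
move=> As.
set A' := map_mx (real_complex R) A.
have A'sym : A' \is symmetricmx.
  apply/is_hermitianmxP; rewrite expr0 scale1r map_mx_id //.
  by rewrite /A' map_trmx As.
have A'real : A' \is a realmx.
  by apply/mxOverP => i j; rewrite mxE real_toC.
have A'h := realsym_hermsym A'sym A'real.
have /orthomx_spectralP A'E := hermitian_normalmx A'h.
have dreal := hermitian_spectral_diag_real A'h.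
set U := spectralmx A' in A'E.
set d := spectral_diag A' in A'E dreal.
have Uu : U \is unitarymx by apply: spectral_unitarymx.
pose r i := complex.Re (d 0 i).
have dE : d = \row_i toC (r i).
  apply/rowP => i; rewrite mxE [LHS]real_C //.
  by apply: (mxOverP dreal).
exists U, r; split => //.
  by rewrite -dE -invmx_unitary.
apply: (@map_poly_inj _ _ (real_complex R)).
rewrite map_char_poly -/A' A'E char_poly_conj ?unitarymx_unit //.
rewrite char_poly_trig ?diag_mx_is_trig // rmorph_prod.
apply: eq_bigr => i _; rewrite /= map_polyXsubC dE !mxE eqxx mulr1n.
by [].
Qed.
End Real.
Ltac vlia := try (simpl in * ); lia.

Section Alpha.
Variable R : rcfType.
Variable N : nat.
Variable mu : nat -> R.
Hypothesis hN : (3 <= N)%N.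
Local Notation A := (bracket_alpha N mu).
Local Notation c := ((N - 1)%:R * mu (N - 2)%N).

Lemma A_big (i j : 'I_N) : (2 <= i)%N -> (2 <= j)%N -> (N + 1 < i + j)%N -> A i j = 0.
Proof.
move=> hi hj hij; rewrite mxE.
have -> : ((val i == 0%N) && (val j == 1%N)) || ((val i == 1%N) && (val j == 0%N)) = false.
  by apply/negbTE/negP => /orP[]/andP[/eqP /= ? /eqP /= ?]; lia.
rewrite hi hj /= /muN.
have -> : (1 <= i - 1 + (j - 1) - 1 <= N - 2)%N = false.
  by apply/negbTE/negP => /andP[? ?]; lia.
by rewrite mulr0.
Qed.

Lemma A_anti (i j : 'I_N) : (2 <= i)%N -> (2 <= j)%N -> (i + j = N + 1)%N -> A i j = c.
Proof.
move=> hi hj hij; rewrite mxE.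
have -> : ((val i == 0%N) && (val j == 1%N)) || ((val i == 1%N) && (val j == 0%N)) = false.
  by apply/negbTE/negP => /orP[]/andP[/eqP /= ? /eqP /= ?]; lia.
rewrite hi hj /= /muN.
have -> : (1 <= i - 1 + (j - 1) - 1 <= N - 2)%N = true.
  by apply/andP; split; lia.
have e1 : (i - 1 + (j - 1) = N - 1)%N by lia.
by rewrite e1; congr (_ * mu _); lia.
Qed.

Lemma A_low (i j : 'I_N) : (i <= 1)%N -> (2 <= j)%N -> A i j = 0 /\ A j i = 0.
Proof.
move=> hi hj; rewrite !mxE.
have -> : ((val i == 0%N) && (val j == 1%N)) || ((val i == 1%N) && (val j == 0%N)) = false.
  by apply/negbTE/negP => /orP[]/andP[/eqP /= ? /eqP /= ?]; lia.
have -> : ((val j == 0%N) && (val i == 1%N)) || ((val j == 1%N) && (val i == 0%N)) = false.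
  by apply/negbTE/negP => /orP[]/andP[/eqP /= ? /eqP /= ?]; lia.
have -> : (2 <= i)%N = false by lia.
by rewrite /= andbF.
Qed.

Lemma A_sym : A^T = A.
Proof.
apply/matrixP => i j; rewrite !mxE.
move: (val i) (val j) => a b.
case: a => [|[|a]]; case: b => [|[|b]] //=.
by rewrite addnC.
Qed.


Lemma A_S (t : nat) (i j : 'I_N) : (N./2 + 1 <= t)%N ->
  (val i == 0%N) || (t <= i)%N -> (val j == 0%N) || (t <= j)%N ->
  A i j = if (i == j) && (i + i == N + 1)%N then c else 0.
Proof.
move=> ht hi hj.
case: (leqP 2 i) => i2; last first.
  have i0 : val i = 0%N by case/orP: hi => [/eqP //|]; vlia.
  have [j0|j2] := eqVneq (val j) 0%N.
    have -> : (i + i == N + 1)%N = false by apply/negbTE/eqP; vlia.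
    by rewrite andbF mxE i0 j0.
  have j2' : (2 <= j)%N by case/orP: hj => [/eqP|]; vlia.
  have -> : (i + i == N + 1)%N = false by apply/negbTE/eqP; vlia.
  by rewrite andbF; case: (A_low (i:=i) (j:=j)) => //; vlia.
case: (leqP 2 j) => j2; last first.
  have j0 : val j = 0%N by case/orP: hj => [/eqP //|]; vlia.
  have -> : (i == j) = false by apply/negbTE/eqP => e; move: j0; rewrite -e; vlia.
  by case: (A_low (i:=j) (j:=i)) => //; vlia.
have it : (t <= i)%N by case/orP: hi => [/eqP|]; vlia.
have jt : (t <= j)%N by case/orP: hj => [/eqP|]; vlia.
have [e|ne] := eqVneq (i + j)%N (N + 1)%N.
  have ij : i = j by apply/val_inj => /=; vlia.
  rewrite -ij eqxx /=; have -> : (i + i == N + 1)%N by apply/eqP; vlia.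
  by apply: A_anti => //; vlia.
have -> : (i == j) && (i + i == N + 1)%N = false.
  by apply/negbTE/negP => /andP[/eqP ij /eqP]; move: ne; rewrite ij => /eqP; vlia.
by apply: A_big => //; vlia.
Qed.

Lemma A_inj (x : 'rV[R]_N) : mu (N - 2)%N != 0 -> x *m A = 0 -> x = 0.
Proof.
move=> mun0 xA.
have cn0 : c != 0 by rewrite mulf_neq0 // pnatr_eq0; vlia.
have col j : \sum_k x 0 k * A k j = 0.
  by move/matrixP: xA => /(_ 0 j); rewrite !mxE.
apply/rowP => i; rewrite mxE.
have [i2|i1] := leqP 2 i; last first.
  have N1 : (1 < N)%N by vlia.
  have [i0|in0] := eqVneq (val i) 0%N.
    have := col (Ordinal N1); rewrite (bigD1 i) //= big1 ?addr0.
      by rewrite mxE /= i0 eqxx /= mulr1.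
    move=> k kn; rewrite mxE /= andbF orbF.
    have -> : (val k == 0%N) = false.
      by apply/negbTE; apply: contra kn => /eqP k0; apply/eqP/val_inj; rewrite /= k0 i0.
    by rewrite /= andbF mulr0.
  have i1' : val i = 1%N by vlia.
  have := col (Ordinal (ltnW N1)); rewrite (bigD1 i) //= big1 ?addr0.
    by rewrite mxE /= i1' eqxx /= mulr1.
  move=> k kn; rewrite mxE /= andbF /=.
  have -> : (val k == 1%N) = false.
    by apply/negbTE; apply: contra kn => /eqP k0; apply/eqP/val_inj; rewrite /= k0 i1'.
  by rewrite /= andbF mulr0.
move: i i2; suff H : forall m (i : 'I_N), val i = m -> (2 <= i)%N -> x 0 i = 0.
  by move=> i i2; apply: (H i).
elim/ltn_ind => m IH i im i2; have iN := ltn_ord i.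
have jN : (N + 1 - i < N)%N by have := ltn_ord i; vlia.
pose j : 'I_N := Ordinal jN.
have := col j; rewrite (bigD1 i) //= big1 ?addr0.
  rewrite A_anti //=; try vlia.
  by move/eqP; rewrite mulf_eq0 (negbTE cn0) orbF => /eqP.
move=> k ki.
have [k2|k1] := leqP 2 k; last first.
  by case: (A_low (i:=k) (j:=j)) => //= [|-> _]; [vlia|rewrite mulr0].
have [kl|kg|ke] := ltngtP k i.
- by rewrite (IH (val k) _ k erefl k2) ?mul0r //; vlia.
- by rewrite A_big ?mulr0 //; vlia.
- by case/eqP: ki; apply/val_inj.
Qed.

End Alpha.
Local Open Scope nat_scope.
Lemma card_ord_pred n (f : pred nat) : #|[set i : 'I_n | f i]| = count f (iota 0 n).
Proof.
rewrite cardsE cardE -val_enum_ord count_map /enum_mem size_filter.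
by rewrite (@eq_filter _ _ predT) // filter_predT; apply: eq_count.
Qed.


Lemma card_S n t : 1 <= t <= n ->
  #|[set i : 'I_n | (val i == 0) || (t <= i)]| = n - t + 1.
Proof.
move=> /andP[t1 tn].
rewrite (card_ord_pred n (fun i => (i == 0) || (t <= i))).
have -> : n = 1 + ((t - 1) + (n - t)) by lia.
rewrite iotaD iotaD !count_cat /=.
rewrite (eq_in_count (a2 := pred0)); last first.
  move=> x; rewrite mem_iota /= => /andP[? ?]; apply/negbTE/negP => /orP[/eqP|]; lia.
rewrite (@eq_in_count _ _ predT (iota (0 + 1 + (t - 1)) (n - t))); last first.
  move=> x; rewrite mem_iota /= => /andP[? ?]; apply/orP; right; lia.
rewrite count_pred0 count_predT size_iota; lia.
Qed.
Local Open Scope ring_scope.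

Section Final.
Variable R : rcfType.
Local Notation C := (complex R).
Local Notation toC := (real_complex R).
Local Open Scope sesquilinear_scope.

Lemma toC_lt0 (a : R) : (toC a < 0) = (a < 0).
Proof. by rewrite ltcE /= eqxx. Qed.
Lemma toC_gt0 (a : R) : (0 < toC a) = (0 < a).
Proof. by rewrite ltcE /= eqxx. Qed.
Lemma toC_le0 (a : R) : (toC a <= 0) = (a <= 0).
Proof. by rewrite lecE /= eqxx. Qed.
Lemma toC_ge0 (a : R) : (0 <= toC a) = (0 <= a).
Proof. by rewrite lecE /= eqxx. Qed.

Variable N : nat.
Variable mu : nat -> R.
Hypothesis hN : (3 <= N)%N.
Local Notation A := (bracket_alpha N mu).
Local Notation c := ((N - 1)%:R * mu (N - 2)%N).
Local Notation A' := (map_mx toC A).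

Definition Sset (t : nat) := [set i : 'I_N | (val i == 0%N) || (t <= i)%N].

Lemma form_S t (x : 'rV[C]_N) : (N./2 + 1 <= t)%N ->
  (forall j, j \notin Sset t -> x 0 j = 0) ->
  form A' x = \sum_(j < N) (if (j + j == N + 1)%N then toC c else 0) * (x 0 j * (x 0 j)^*).
Proof.
move=> ht xS; rewrite /form mxE; apply: eq_bigr => j _.
rewrite !mxE.
case: (boolP (j \in Sset t)) => jS; last first.
  by rewrite xS // rmorph0 mul0r !mulr0.
rewrite (bigD1 j) //= big1 ?addr0; last first.
  move=> i ij; case: (boolP (i \in Sset t)) => iS; last by rewrite xS // mul0r.
  rewrite mxE (@A_S R N mu hN _ _ _ ht) ?(negbTE ij) /=; last 2 first.
  - by move: iS; rewrite inE.
  - by move: jS; rewrite inE.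
  by rewrite rmorph0 mulr0.
rewrite mxE (@A_S R N mu hN _ _ _ ht) ?eqxx /=; last 2 first.
- by move: jS; rewrite inE.
- by move: jS; rewrite inE.
case: (j + j == N + 1)%N; last by rewrite rmorph0 mulr0 !mul0r.
by rewrite mulrAC mulrC.
Qed.

Lemma form_even (x : 'rV[C]_N) :
  (forall j, j \notin Sset (uphalf N + 1) -> x 0 j = 0) -> form A' x = 0.
Proof.
move=> xS; rewrite (form_S (t := uphalf N + 1)) //; last by lia.
apply: big1 => j _; case: eqP => [e|_]; last by rewrite mul0r.
rewrite xS ?mul0r ?mulr0 //.
rewrite inE negb_or; apply/andP; split; apply/negP; [move/eqP|]; vlia.
Qed.

End Final.

Local Close Scope sesquilinear_scope.
Unset Implicit Arguments.

Theorem proposition7 (R : rcfType) (N : nat) (mu : nat -> R) :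
  (3 <= N)%N -> mu (N - 2)%N != 0 ->
  bracket_signature N mu = (N./2, uphalf N) \/
  bracket_signature N mu = (uphalf N, N./2).
Proof.
move=> hN mun0.
have [U [r [Uu AE cpE]]] := spectral_real (@A_sym R N mu).
set A := bracket_alpha N mu in AE cpE *.
have posE : npos_eig A = #|[set i | 0 < r i]|.
  by rewrite /npos_eig cpE (count_roots r (fun x => 0 < x)).
have negE : nneg_eig A = #|[set i | r i < 0]|.
  by rewrite /nneg_eig cpE (count_roots r (fun x => x < 0)).
set Tp := [set i | 0 < r i] in posE *.
set Tn := [set i | r i < 0] in negE *.
have rn0 : forall i, r i != 0.
  have Au : A \in unitmx.
    rewrite -row_free_unit -kermx_eq0; apply/negPn/negP => kn0.
    have /sub_kermxP h := nz_row_sub (kermx A).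
    have := A_inj hN mun0 h; move/eqP; rewrite nz_row_eq0 (negbTE kn0).
    by [].
  have : \det (map_mx (real_complex R) A) != 0.
    by rewrite det_map_mx fmorph_eq0 -unitfE -unitmxE.
  rewrite AE !det_mulmx det_diag.
  move=> h i; apply: contraNneq h => ri0.
  by rewrite (bigD1 i) //= mxE ri0 rmorph0 !(mul0r, mulr0).
have PQ : (#|Tp| + #|Tn| = N)%N.
  have -> : Tn = ~: Tp.
    apply/setP => i; rewrite !inE.
    by rewrite -leNgt le_eqVlt (negbTE (rn0 i)).
  by rewrite cardsC card_ord.
have cSo : #|Sset N (N./2 + 1)| = uphalf N.
  rewrite /Sset card_S; first lia.
  by apply/andP; split; lia.
have cSe : #|Sset N (uphalf N + 1)| = N./2.
  rewrite /Sset card_S; first lia.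
  by apply/andP; split; lia.
have Hneg (S : {set 'I_N}) : (forall x : 'rV[complex R]_N, (forall j, j \notin S -> x 0 j = 0) ->
    0 <= form (map_mx (real_complex R) A) x) ->
    (#|Tn| + #|S| <= N)%N.
  move=> HS; apply: (key (d := \row_i real_complex R (r i)) Uu) => [i|x xs].
    by rewrite inE mxE toC_lt0.
  by rewrite -AE; apply: HS.
have Hpos (S : {set 'I_N}) : (forall x : 'rV[complex R]_N, (forall j, j \notin S -> x 0 j = 0) ->
    form (map_mx (real_complex R) A) x <= 0) ->
    (#|Tp| + #|S| <= N)%N.
  move=> HS; apply: (key' (d := \row_i real_complex R (r i)) Uu) => [i|x xs].
    by rewrite inE mxE toC_gt0.
  by rewrite -AE; apply: HS.
have Heven : forall x : 'rV[complex R]_N, (forall j, j \notin Sset N (uphalf N + 1) -> x 0 j = 0) ->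
    form (map_mx (real_complex R) A) x = 0.
  by move=> x; apply: form_even.
have cn0 : (N - 1)%:R * mu (N - 2)%N != 0 by rewrite mulf_neq0 // pnatr_eq0; lia.
rewrite /bracket_signature /signature posE negE.
have [cpos|cneg] : 0 < (N - 1)%:R * mu (N - 2)%N \/ (N - 1)%:R * mu (N - 2)%N < 0.
  by case: (ltgtP 0 ((N - 1)%:R * mu (N - 2)%N)) => [h|h|h]; [left|right|move: cn0; rewrite h eqxx].
- have h1 : (#|Tn| + #|Sset N (N./2 + 1)| <= N)%N.
    apply: Hneg => x xs; rewrite (@form_S R N mu hN (N./2 + 1) x) //.
    apply: sumr_ge0 => j _; case: ifP => _; last by rewrite mul0r.
    by apply: mulr_ge0; [rewrite toC_ge0 ltW | exact: mul_conjC_ge0].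
  have h2 : (#|Tp| + #|Sset N (uphalf N + 1)| <= N)%N.
    by apply: Hpos => x xs; rewrite Heven.
  rewrite cSo in h1; rewrite cSe in h2.
  by right; congr (_, _); lia.
- have h1 : (#|Tp| + #|Sset N (N./2 + 1)| <= N)%N.
    apply: Hpos => x xs; rewrite (@form_S R N mu hN (N./2 + 1) x) //.
    apply: sumr_le0 => j _; case: ifP => _; last by rewrite mul0r.
    by apply: mulr_le0_ge0; [rewrite toC_le0 ltW | exact: mul_conjC_ge0].
  have h2 : (#|Tn| + #|Sset N (uphalf N + 1)| <= N)%N.
    by apply: Hneg => x xs; rewrite Heven.
  rewrite cSo in h1; rewrite cSe in h2.
  by left; congr (_, _); lia.
Qed.
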